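(* If $d$ is a squarefree integer such that $H^d(\mathbb{Q})\neq\emptyset$, then $H^d(\mathbb{Q})$ is infinite.
   Context: $H^d$ denotes the genus one curve $d y^2=(x^2-x-3)(x^2+2x-12)$ (smooth projective model). *)

(* Defs.v *)
From mathcomp Require Import all_boot all_order all_algebra.
Set Implicit Arguments. Unset Strict Implicit. Unset Printing Implicit Defensive.
Import Order.TTheory GRing.Theory Num.Theory.
Local Open Scope ring_scope.

Definition squarefree_int (d : int) : Prop :=
  d != 0 /\ forall n : int, (n ^+ 2 %| d)%Z -> n ^+ 2 = 1.

Definition Fhom (X Z : rat) : rat :=
  (X ^+ 2 - X * Z - 3 * Z ^+ 2) * (X ^+ 2 + 2 * X * Z - 12 * Z ^+ 2).

(* The smooth projective model of  d y^2 = (x^2-x-3)(x^2+2x-12)  is the curve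
   d Y^2 = F(X,Z) in the weighted projective plane P(1,2,1) (the quartic has
   distinct roots, so this curve is smooth).  A rational point is represented
   by a nonzero triple (X,Y,Z) of rationals on the curve, up to the weighted
   scaling (X,Y,Z) ~ (l X, l^2 Y, l Z), l <> 0. *)
Definition Hd_triple (d : int) (p : rat * rat * rat) : Prop :=
  let: (X, Y, Z) := p in
  (X, Y, Z) != (0, 0, 0) /\ d%:~R * Y ^+ 2 = Fhom X Z.

Definition wequiv (p q : rat * rat * rat) : Prop :=
  let: (X, Y, Z) := p in
  exists l : rat, l != 0 /\ q = (l * X, l ^+ 2 * Y, l * Z).

Definition Hd_nonempty (d : int) : Prop := exists p, Hd_triple d p.

Definition Hd_infinite (d : int) : Prop :=
  forall s : seq (rat * rat * rat),
    exists p, Hd_triple d p /\ forall q, q \in s -> ~ wequiv q p.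

(* Main.v *)
Require Import Defs.
From mathcomp Require Import all_boot all_order all_algebra.
From Stdlib Require Import ZArith Lia Znumtheory List.

Local Open Scope Z_scope.

Fixpoint zp (x : Z) (n : nat) : Z := match n with O => 1 | S n => x * zp x n end.
Fixpoint evh (l : list Z) (x z : Z) : Z :=
  match l with nil => 0 | c :: l' => c * zp z (length l') + x * evh l' x z end.
Definition Al : list Z := [:: (-62208); (66096); (25920); (-56736); (19008); (3240); (-2544); (72); (144); (-21)].
Definition Bl : list Z := [:: (-27216); (31104); (2592); (-15264); (3240); (3168); (-1576); (120); (51); (-8)].
Definition Wl : list Z := [:: (45349632); (-362797056); (806215680); (-924908544); (641426688); (-225566208); (-54577152); (119155968); (-69223392); (19859328); (-1516032); (-1044288); (494928); (-118944); (17280); (-1296); (27)].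
Definition U1l : list Z := [:: (-1488625252208640); (1246561614489600); (529649598836736); (-676260786926592); (-33168297581568); (164871613804032); (-34981960375296); (-4570623127296); (1379078203392)].
Definition V1l : list Z := [:: (3402572005048320); (-2575862725570560); (-2220790707283968); (2430816462581760); (-284129291234304); (-270472736646144); (55270629904896); (13742167974912); (-3620254963968)].
Definition U2l : list Z := [:: (-465567768); (294542352); (197440236); (-161032484); (-28193874); (40201260); (-6121303); (-1183335); (260520)].
Definition V2l : list Z := [:: (1064103552); (-587785896); (-749784816); (588961812); (-19747548); (-67104702); (8759436); (3435975); (-683865)].

Definition Az x z := evh Al x z.
Definition Bz x z := evh Bl x z.
Definition Wz x z := evh Wl x z.
Definition Fz (x z : Z) : Z := (x*x - x*z - 3*(z*z)) * (x*x + 2*x*z - 12*(z*z)).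
Definition R2 : Z := 1397440512.

Lemma idF x z : Fz (Az x z) (Bz x z) = Fz x z * (Wz x z * Wz x z).
Proof. unfold Fz, Az, Bz, Wz, Al, Bl, Wl. cbn [evh zp length]. ring. Qed.

Lemma idX x z : evh U1l x z * Az x z + evh V1l x z * Bz x z = R2 * zp x 17.
Proof. unfold Az, Bz, Al, Bl, U1l, V1l, R2. cbn [evh zp length]. ring. Qed.

Lemma idZ x z : evh U2l x z * Az x z + evh V2l x z * Bz x z = R2 * zp z 17.
Proof. unfold Az, Bz, Al, Bl, U2l, V2l, R2. cbn [evh zp length]. ring. Qed.

Definition Mz x z := Z.max (Z.abs x) (Z.abs z).
Fixpoint evp (l : list Z) (x z : Z) : Z * Z :=
  match l with
  | nil => (0, 1)
  | c :: l' =>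
    match l' with
    | nil => (c, 1)
    | _ => let (v, p) := evp l' x z in let p' := p * z in (c * p' + x * v, p')
    end
  end.

Lemma evp_spec l x z : evp l x z = (evh l x z, zp z (Nat.pred (length l))).
Proof.
  induction l as [|c l IH]; [reflexivity|].
  destruct l as [|c' l'].
  - cbn. f_equal. ring.
  - change (evp (c :: c' :: l') x z) with
      (let (v, p) := evp (c' :: l') x z in let p' := p * z in (c * p' + x * v, p')).
    rewrite IH. cbn [evh length Nat.pred zp]. f_equal; ring.
Qed.

Definition chk (x z : Z) : bool :=
  if Z.gcd x z =? 1 then
    let a := fst (evp Al x z) in let b := fst (evp Bl x z) in
    (Z.gcd (Z.gcd R2 a) b * Mz x z <? Z.max (Z.abs a) (Z.abs b))
  else true.
Definition rngx : list Z := List.map (fun n => Z.of_nat n - 105) (List.seq 0 211).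
Definition zs (x : Z) : list Z := List.map Z.of_nat (List.seq 0 (S (Z.abs_nat x))).
Definition rng16 : list Z := List.map (fun n => Z.of_nat n - 16) (List.seq 0 33).
Definition rngz16 : list Z := List.map Z.of_nat (List.seq 0 17).
Lemma chk_all1 : List.forallb (fun x => List.forallb (fun z => chk x z) (zs x)) rngx = true.
Proof. vm_compute. reflexivity. Qed.
Lemma chk_all2 : List.forallb (fun z => List.forallb (fun x => chk x z) rng16) rngz16 = true.
Proof. vm_compute. reflexivity. Qed.

Lemma in_rng_gen k x : -(Z.of_nat k) <= x <= Z.of_nat k ->
  List.In x (List.map (fun n => Z.of_nat n - Z.of_nat k) (List.seq 0 (S (Nat.mul 2 k)))).
Proof.
  intros H. apply List.in_map_iff. exists (Z.to_nat (x + Z.of_nat k)).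
  split; [rewrite Z2Nat.id; lia | apply List.in_seq; lia].
Qed.

Lemma in_nat_gen k z : 0 <= z <= Z.of_nat k -> List.In z (List.map Z.of_nat (List.seq 0 (S k))).
Proof.
  intros H. apply List.in_map_iff. exists (Z.to_nat z).
  split; [rewrite Z2Nat.id; lia | apply List.in_seq; lia].
Qed.

Lemma chk_small1 x z : Z.abs x <= 105 -> 0 <= z <= Z.abs x -> chk x z = true.
Proof.
  intros Hx Hz. pose proof chk_all1 as H.
  pose proof (proj1 (List.forallb_forall _ _) H x (in_rng_gen 105 x ltac:(lia))) as H1.
  apply (proj1 (List.forallb_forall _ _) H1 z).
  unfold zs. apply in_nat_gen. lia.
Qed.

Lemma chk_small2 x z : Z.abs x <= 16 -> 0 <= z <= 16 -> chk x z = true.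
Proof.
  intros Hx Hz. pose proof chk_all2 as H.
  pose proof (proj1 (List.forallb_forall _ _) H z (in_nat_gen 16 z ltac:(lia))) as H1.
  exact (proj1 (List.forallb_forall _ _) H1 x (in_rng_gen 16 x ltac:(lia))).
Qed.

Fixpoint sabs (l : list Z) : Z := match l with nil => 0 | c :: l' => Z.abs c + sabs l' end.

Lemma sabs_nonneg l : 0 <= sabs l.
Proof. induction l; simpl; lia. Qed.

Lemma zp_abs x n : Z.abs (zp x n) = zp (Z.abs x) n.
Proof. induction n; simpl; [reflexivity|]. rewrite Z.abs_mul IHn. reflexivity. Qed.

Lemma zp_nonneg x n : 0 <= x -> 0 <= zp x n.
Proof. intros; induction n; simpl; nia. Qed.

Lemma zp_mono a b n : 0 <= a <= b -> zp a n <= zp b n.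
Proof.
  intros H; induction n; simpl; [lia|].
  pose proof (zp_nonneg a n ltac:(lia)). apply Z.mul_le_mono_nonneg; lia.
Qed.

Lemma zp_add x m n : zp x (m + n) = zp x m * zp x n.
Proof. induction m as [|m IH]; [rewrite add0n; cbn [zp]; ring | rewrite addSn; cbn [zp]; rewrite IH; ring]. Qed.

Lemma evh_bound l x z M : Z.abs x <= M -> Z.abs z <= M ->
  Z.abs (evh l x z) <= sabs l * zp M (Nat.pred (length l)).
Proof.
  intros Hx Hz. induction l as [|c l IH]; simpl; [lia|].
  assert (HM : 0 <= M) by lia.
  assert (H1 : Z.abs (c * zp z (length l)) <= Z.abs c * zp M (length l)).
  { rewrite Z.abs_mul zp_abs. apply Z.mul_le_mono_nonneg_l; [lia|].
    apply zp_mono; lia. }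
  destruct l as [|c' l'].
  - simpl in *. lia.
  - simpl length in *. simpl Nat.pred in IH.
    assert (H2 : Z.abs (x * evh (c' :: l') x z) <= sabs (c' :: l') * zp M (S (length l'))).
    { rewrite Z.abs_mul. simpl zp.
      pose proof (sabs_nonneg (c' :: l')).
      pose proof (zp_nonneg M (length l') HM).
      replace (sabs (c' :: l') * (M * zp M (length l'))) with
        (M * (sabs (c' :: l') * zp M (length l'))) by ring.
      apply Z.mul_le_mono_nonneg; lia. }
    pose proof (Z.abs_triangle (c * zp z (S (length l'))) (x * evh (c' :: l') x z)).
    lia.
Qed.

Lemma rel_prime_zp x z n m : rel_prime x z -> rel_prime (zp x n) (zp z m).
Proof.
  intros H.
  assert (H1 : forall k, rel_prime x (zp z k)).
  { induction k; simpl; [apply rel_prime_sym, rel_prime_1 | apply rel_prime_mult; auto]. }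
  assert (H2 : forall j k, rel_prime (zp x j) (zp z k)).
  { induction j; intros k; simpl; [apply rel_prime_1|].
    apply rel_prime_sym, rel_prime_mult; apply rel_prime_sym; auto. }
  auto.
Qed.

Lemma gcd_div_R2 x z : Z.gcd x z = 1 -> (Z.gcd (Az x z) (Bz x z) | R2).
Proof.
  intros H. set (g := Z.gcd (Az x z) (Bz x z)).
  assert (Ha : (g | Az x z)) by apply Z.gcd_divide_l.
  assert (Hb : (g | Bz x z)) by apply Z.gcd_divide_r.
  assert (H1 : (g | R2 * zp x 17)).
  { rewrite -(idX x z). apply Z.divide_add_r; apply Z.divide_mul_r; auto. }
  assert (H2 : (g | R2 * zp z 17)).
  { rewrite -(idZ x z). apply Z.divide_add_r; apply Z.divide_mul_r; auto. }
  pose proof (Z.gcd_greatest _ _ _ H1 H2) as H3.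
  rewrite Z.gcd_mul_mono_l in H3.
  assert (Hc : Z.gcd (zp x 17) (zp z 17) = 1).
  { apply Zgcd_1_rel_prime, rel_prime_zp, Zgcd_1_rel_prime; auto. }
  rewrite Hc in H3. replace (Z.abs R2 * 1) with R2 in H3 by reflexivity. exact H3.
Qed.

Lemma large_arith (R S P M mx g : Z) : 0 < R -> 0 < M -> 0 <= g <= R -> S < P -> 0 <= S ->
  R * (P * M) <= S * mx -> g * M < mx.
Proof.
  intros. destruct (Z_lt_le_dec (g * M) mx) as [|Hc]; [assumption|exfalso].
  assert (g * M <= R * M) by (apply Z.mul_le_mono_nonneg_r; lia).
  assert (S * mx <= S * (R * M)) by (apply Z.mul_le_mono_nonneg_l; lia).
  assert (S * (R * M) < P * (R * M)) by (apply Z.mul_lt_mono_pos_r; nia).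
  nia.
Qed.

Lemma chk_ok x z : Z.gcd x z = 1 -> chk x z = true ->
  Z.gcd (Az x z) (Bz x z) * Mz x z < Z.max (Z.abs (Az x z)) (Z.abs (Bz x z)).
Proof.
  intros H C. unfold chk in C. rewrite H in C. cbv zeta in C.
  rewrite !evp_spec in C. cbn [fst] in C. fold (Az x z) (Bz x z) in C.
  apply Z.ltb_lt in C.
  rewrite -Z.gcd_assoc in C.
  pose proof (gcd_div_R2 x z H) as D.
  rewrite Z.gcd_comm in C.
  rewrite (proj1 (Z.divide_gcd_iff _ _ (Z.gcd_nonneg _ _)) D) in C.
  exact C.
Qed.

Lemma large_gen x z (U V : list Z) (t : Z) (S : Z) (T : Z) : Z.gcd x z = 1 ->
  evh U x z * Az x z + evh V x z * Bz x z = R2 * zp t 17 ->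
  length U = 9%nat -> length V = 9%nat -> Z.abs t = Mz x z ->
  sabs U + sabs V = S -> S < zp T 8 -> 0 <= T <= Mz x z ->
  Z.gcd (Az x z) (Bz x z) * Mz x z < Z.max (Z.abs (Az x z)) (Z.abs (Bz x z)).
Proof.
  intros H E LU LV Ht ES HST HT.
  set (a := Az x z) in *. set (b := Bz x z) in *. set (M := Mz x z) in *.
  set (mx := Z.max (Z.abs a) (Z.abs b)).
  set (g := Z.gcd a b).
  assert (Hg : 0 <= g <= R2).
  { split. apply Z.gcd_nonneg. apply Z.divide_pos_le. unfold R2; lia. apply gcd_div_R2; auto. }
  assert (HxM : Z.abs x <= M) by (unfold M, Mz; lia).
  assert (HzM : Z.abs z <= M) by (unfold M, Mz; lia).
  set (P := zp M 8).
  assert (HP : zp T 8 <= P) by (apply zp_mono; lia).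
  assert (Hma : Z.abs a <= mx) by (unfold mx; lia).
  assert (Hmb : Z.abs b <= mx) by (unfold mx; lia).
  assert (Hmx : 0 <= mx) by (unfold mx; lia).
  pose proof (sabs_nonneg U). pose proof (sabs_nonneg V).
  assert (HP' : 0 < P) by lia.
  assert (HM0 : 0 < M).
  { destruct (Z.eq_dec M 0) as [E0|E0]; [|lia].
    exfalso. assert (x = 0) by lia. assert (z = 0) by lia. subst. discriminate. }
  assert (G : R2 * (P * M) <= (sabs U + sabs V) * mx).
  { pose proof (evh_bound U x z M HxM HzM) as BU.
    pose proof (evh_bound V x z M HxM HzM) as BV.
    rewrite LU in BU. rewrite LV in BV. simpl Nat.pred in BU, BV. fold P in BU, BV.
    assert (E2 : Z.abs (R2 * zp t 17) = R2 * (P * (P * M))).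
    { rewrite Z.abs_mul zp_abs Ht. unfold P.
      replace 17%nat with (8 + (8 + 1))%nat by reflexivity.
      rewrite !zp_add. simpl (zp M 1). unfold R2. simpl Z.abs. ring. }
    rewrite -E in E2.
    pose proof (Z.abs_triangle (evh U x z * a) (evh V x z * b)) as T0.
    rewrite !Z.abs_mul in T0.
    assert (Z.abs (evh U x z) * Z.abs a <= sabs U * P * mx)
      by (apply Z.mul_le_mono_nonneg; lia).
    assert (Z.abs (evh V x z) * Z.abs b <= sabs V * P * mx)
      by (apply Z.mul_le_mono_nonneg; lia).
    assert (H5 : P * (R2 * (P * M)) <= P * ((sabs U + sabs V) * mx)).
    { replace (P * (R2 * (P * M))) with (R2 * (P * (P * M))) by ring.
      replace (P * ((sabs U + sabs V) * mx)) with (sabs U * P * mx + sabs V * P * mx) by ring.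
      lia. }
    apply Z.mul_le_mono_pos_l in H5; auto. }
  apply (large_arith R2 (sabs U + sabs V) P M mx g); auto; try lia.
  unfold R2; lia.
Qed.

Lemma key_pos x z : Z.gcd x z = 1 -> 0 <= z ->
  Z.gcd (Az x z) (Bz x z) * Mz x z < Z.max (Z.abs (Az x z)) (Z.abs (Bz x z)).
Proof.
  intros H Hz.
  destruct (Z_le_gt_dec z (Z.abs x)) as [Hr|Hr].
  - destruct (Z_le_gt_dec (Z.abs x) 105) as [Hs|Hl].
    + apply chk_ok; auto. apply chk_small1; lia.
    + exact (large_gen x z U1l V1l x 15437345806761984 106 H (idX x z) erefl erefl
        ltac:(unfold Mz; lia) ltac:(vm_compute; reflexivity) ltac:(vm_compute; reflexivity)
        ltac:(unfold Mz; lia)).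
  - destruct (Z_le_gt_dec z 16) as [Hs|Hl].
    + apply chk_ok; auto. apply chk_small2; lia.
    + exact (large_gen x z U2l V2l z 4284910734 16 H (idZ x z) erefl erefl
        ltac:(unfold Mz; lia) ltac:(vm_compute; reflexivity) ltac:(vm_compute; reflexivity)
        ltac:(unfold Mz; lia)).
Qed.

Lemma Az_opp x z : Az (-x) (-z) = - Az x z.
Proof. unfold Az, Al. cbn [evh zp length]. ring. Qed.
Lemma Bz_opp x z : Bz (-x) (-z) = - Bz x z.
Proof. unfold Bz, Bl. cbn [evh zp length]. ring. Qed.

Lemma key x z : Z.gcd x z = 1 ->
  Z.gcd (Az x z) (Bz x z) * Mz x z < Z.max (Z.abs (Az x z)) (Z.abs (Bz x z)).
Proof.
  intros H. destruct (Z_le_gt_dec 0 z) as [Hz|Hz]; [apply key_pos; auto|].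
  assert (H' : Z.gcd (-x) (-z) = 1) by (rewrite Z.gcd_opp_l Z.gcd_opp_r; exact H).
  pose proof (key_pos (-x) (-z) H' ltac:(lia)) as K.
  rewrite Az_opp Bz_opp Z.gcd_opp_l Z.gcd_opp_r !Z.abs_opp in K.
  unfold Mz in *. rewrite !Z.abs_opp in K. exact K.
Qed.

Definition gZ (x z : Z) : Z := Z.gcd (Az x z) (Bz x z).
Definition stepZ (p : Z * Z) : Z * Z :=
  let x := fst p in let z := snd p in (Az x z / gZ x z, Bz x z / gZ x z).

Lemma gZ_pos x z : Z.gcd x z = 1 -> 0 < gZ x z.
Proof.
  intros H. pose proof (key x z H) as K. unfold gZ in *.
  pose proof (Z.gcd_nonneg (Az x z) (Bz x z)).
  destruct (Z.eq_dec (Z.gcd (Az x z) (Bz x z)) 0) as [E|E]; [|lia].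
  apply Z.gcd_eq_0 in E. destruct E as [E1 E2]. rewrite E1 E2 in K. simpl in K. lia.
Qed.

Lemma stepZ_spec x z : Z.gcd x z = 1 ->
  Az x z = gZ x z * fst (stepZ (x, z)) /\ Bz x z = gZ x z * snd (stepZ (x, z)).
Proof.
  intros H. pose proof (gZ_pos x z H). unfold stepZ; simpl.
  destruct (Z.gcd_divide_l (Az x z) (Bz x z)) as [k1 E1].
  destruct (Z.gcd_divide_r (Az x z) (Bz x z)) as [k2 E2].
  fold (gZ x z) in E1, E2.
  split.
  - rewrite E1 Z.div_mul; lia.
  - rewrite E2 Z.div_mul; lia.
Qed.

Lemma stepZ_cop x z : Z.gcd x z = 1 -> Z.gcd (fst (stepZ (x, z))) (snd (stepZ (x, z))) = 1.
Proof.
  intros H. pose proof (gZ_pos x z H). unfold stepZ; simpl.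
  apply Z.gcd_div_gcd; [lia | reflexivity].
Qed.

Lemma stepZ_M x z : Z.gcd x z = 1 -> Mz x z < Mz (fst (stepZ (x, z))) (snd (stepZ (x, z))).
Proof.
  intros H. pose proof (gZ_pos x z H) as Hg. pose proof (key x z H) as K.
  destruct (stepZ_spec x z H) as [E1 E2].
  fold (gZ x z) in K. rewrite E1 E2 in K. unfold Mz in *.
  rewrite !Z.abs_mul in K. rewrite (Z.abs_eq (gZ x z)) in K; [|lia].
  rewrite Z.mul_max_distr_nonneg_l in K; [|lia].
  apply Z.mul_lt_mono_pos_l in K; auto.
Qed.

Lemma cop_cross x z x' z' : Z.gcd x z = 1 -> Z.gcd x' z' = 1 -> x * z' = x' * z ->
  Mz x z = Mz x' z'.
Proof.
  intros H1 H2 E. unfold Mz.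
  assert (A1 : (x | x')).
  { apply (Z.gauss x z x'); [exists z'; lia | exact H1]. }
  assert (A2 : (x' | x)).
  { apply (Z.gauss x' z' x); [exists z; lia | exact H2]. }
  assert (B1 : (z | z')).
  { apply (Z.gauss z x z'); [exists x'; lia | rewrite Z.gcd_comm; exact H1]. }
  assert (B2 : (z' | z)).
  { apply (Z.gauss z' x' z); [exists x; lia | rewrite Z.gcd_comm; exact H2]. }
  rewrite (Z.divide_antisym_abs _ _ A1 A2) (Z.divide_antisym_abs _ _ B1 B2). reflexivity.
Qed.

Fixpoint pZ (p0 : Z * Z) (n : nat) : Z * Z :=
  match n with O => p0 | S n => stepZ (pZ p0 n) end.

Lemma pZ_cop p0 n : Z.gcd (fst p0) (snd p0) = 1 -> Z.gcd (fst (pZ p0 n)) (snd (pZ p0 n)) = 1.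
Proof.
  intros H. induction n as [|n IH]; [exact H|]. cbn [pZ].
  destruct (pZ p0 n) as [x z]. apply stepZ_cop. exact IH.
Qed.

Lemma pZ_M p0 n m : Z.gcd (fst p0) (snd p0) = 1 -> (n < m)%coq_nat ->
  Mz (fst (pZ p0 n)) (snd (pZ p0 n)) < Mz (fst (pZ p0 m)) (snd (pZ p0 m)).
Proof.
  intros H Hnm. induction Hnm as [|m Hm IH].
  - cbn [pZ]. pose proof (pZ_cop p0 n H) as C. destruct (pZ p0 n) as [x z].
    apply stepZ_M. exact C.
  - cbn [pZ]. pose proof (pZ_cop p0 m H) as C. destruct (pZ p0 m) as [x z].
    pose proof (stepZ_M x z C). simpl in IH. lia.
Qed.

Lemma pZ_inj p0 n m : Z.gcd (fst p0) (snd p0) = 1 ->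
  fst (pZ p0 n) * snd (pZ p0 m) = fst (pZ p0 m) * snd (pZ p0 n) -> n = m.
Proof.
  intros H E.
  pose proof (cop_cross _ _ _ _ (pZ_cop p0 n H) (pZ_cop p0 m H) E) as EM.
  destruct (Nat.lt_trichotomy n m) as [L|[L|L]]; auto.
  - pose proof (pZ_M p0 n m H L). lia.
  - pose proof (pZ_M p0 m n H L). lia.
Qed.

Lemma Fz_scale g a b : Fz (g * a) (g * b) = g * g * g * g * Fz a b.
Proof. unfold Fz. ring. Qed.

Lemma cop_nz x z : Z.gcd x z = 1 -> ~ (x = 0 /\ z = 0).
Proof. intros H [E1 E2]. rewrite E1 E2 in H. discriminate. Qed.

Local Close Scope Z_scope.

From mathcomp Require Import ssrZ.
From mathcomp Require Import ring.
From Stdlib Require Import Classical_Prop.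
Import Order.TTheory GRing.Theory Num.Theory.
Local Open Scope ring_scope.

Definition psi (z : Z) : rat := (int_of_Z z)%:~R.
Lemma psiM a b : psi (a * b)%Z = psi a * psi b.
Proof. by rewrite /psi rmorphM /= intrM. Qed.
Lemma psiD a b : psi (a + b)%Z = psi a + psi b.
Proof. by rewrite /psi rmorphD /= intrD. Qed.
Lemma psiB a b : psi (a - b)%Z = psi a - psi b.
Proof. by rewrite /psi rmorphB /= intrB. Qed.
Lemma psi3 : psi 3%Z = 3. Proof. reflexivity. Qed.
Lemma psi12 : psi 12%Z = 12. Proof. reflexivity. Qed.
Lemma psi2 : psi 2%Z = 2. Proof. reflexivity. Qed.
Lemma psi0 : psi 0%Z = 0. Proof. reflexivity. Qed.
Lemma psi_inj a b : psi a = psi b -> a = b.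
Proof. rewrite /psi => /eqP; rewrite eqr_int => /eqP H. by rewrite -(int_of_ZK a) H int_of_ZK. Qed.
Lemma psiZ (u : int) : psi (Z_of_int u) = u%:~R.
Proof. by rewrite /psi Z_of_intK. Qed.

Lemma Fhom_psi x z : Fhom (psi x) (psi z) = psi (Fz x z).
Proof.
  rewrite /Fhom /Fz. repeat (rewrite psiM || rewrite psiB || rewrite psiD).
  rewrite psi3 psi12 psi2. ring.
Qed.

Lemma psi_l (g F : Z) : psi (g * g * g * g * F)%Z = psi g ^+ 4 * psi F.
Proof. rewrite !psiM; ring. Qed.
Lemma psi_r (F W : Z) : psi (F * (W * W))%Z = psi F * psi W ^+ 2.
Proof. rewrite !psiM; ring. Qed.

Lemma hom4 (c X Z : rat) : Fhom (c * X) (c * Z) = c ^+ 4 * Fhom X Z.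
Proof. rewrite /Fhom. ring. Qed.

Lemma step_rat (d : int) x z (Y : rat) : Z.gcd x z = 1%Z ->
  d%:~R * Y ^+ 2 = Fhom (psi x) (psi z) ->
  d%:~R * (Y * psi (Wz x z) / psi (gZ x z) ^+ 2) ^+ 2
    = Fhom (psi (stepZ (x, z)).1) (psi (stepZ (x, z)).2).
Proof.
  move=> H HY.
  have Hg := gZ_pos x z H.
  have Hg0 : psi (gZ x z) != 0.
  { apply/eqP => E. rewrite -psi0 in E. move: (psi_inj _ _ E) => E'. lia. }
  case: (stepZ_spec x z H) => E1 E2.
  have E3 := idF x z. rewrite E1 E2 Fz_scale in E3.
  have E4 := congr1 psi E3. rewrite psi_l psi_r -(Fhom_psi x z) -HY in E4.
  rewrite Fhom_psi.
  have E5 : psi (Fz (stepZ (x, z)).1 (stepZ (x, z)).2) =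
     d%:~R * Y ^+ 2 * psi (Wz x z) ^+ 2 / psi (gZ x z) ^+ 4.
  { rewrite -E4. field. exact: Hg0. }
  rewrite E5. field. exact: Hg0.
Qed.

Fixpoint Yq (p0 : Z * Z) (Y0 : rat) (n : nat) : rat :=
  match n with
  | O => Y0
  | S n => let p := pZ p0 n in Yq p0 Y0 n * psi (Wz p.1 p.2) / psi (gZ p.1 p.2) ^+ 2
  end.

Lemma Yq_inv (d : int) p0 Y0 n : Z.gcd p0.1 p0.2 = 1%Z ->
  d%:~R * Y0 ^+ 2 = Fhom (psi p0.1) (psi p0.2) ->
  d%:~R * (Yq p0 Y0 n) ^+ 2 = Fhom (psi (pZ p0 n).1) (psi (pZ p0 n).2).
Proof.
  move=> H HY. elim: n => [|n IH] //=.
  have C := pZ_cop p0 n H.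
  move: IH C. case: (pZ p0 n) => x z /= IH C.
  exact: step_rat.
Qed.

Definition Pt p0 Y0 n : rat * rat * rat :=
  (psi (pZ p0 n).1, Yq p0 Y0 n, psi (pZ p0 n).2).

Lemma Pt_triple (d : int) p0 Y0 n : Z.gcd p0.1 p0.2 = 1%Z ->
  d%:~R * Y0 ^+ 2 = Fhom (psi p0.1) (psi p0.2) -> Hd_triple d (Pt p0 Y0 n).
Proof.
  move=> H HY. rewrite /Hd_triple /Pt. split; last exact: Yq_inv.
  apply/negP => /eqP [] E1 _ E2.
  rewrite -psi0 in E1 E2.
  apply: (cop_nz _ _ (pZ_cop p0 n H)). split; exact: psi_inj.
Qed.

Lemma Pt_uniq p0 Y0 q n m : Z.gcd p0.1 p0.2 = 1%Z ->
  wequiv q (Pt p0 Y0 n) -> wequiv q (Pt p0 Y0 m) -> n = m.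
Proof.
  move=> H. case: q => [[X Y] Z] /= [l1 [_ E1]] [l2 [_ E2]].
  rewrite /Pt in E1 E2. case: E1 => E1x _ E1z. case: E2 => E2x _ E2z.
  apply: (pZ_inj p0 n m H). apply: psi_inj.
  rewrite !psiM E1x E1z E2x E2z. ring.
Qed.

Lemma pigeon (T : eqType) (R : T -> nat -> Prop) (s : list T) :
  (forall q n m, R q n -> R q m -> n = m) ->
  exists N : nat, forall n : nat, leq N n -> forall q, q \in s -> ~ R q n.
Proof.
  move=> HR. elim: s => [|q s [N HN]].
  - by exists 0%nat => n _ q; rewrite seq.in_nil.
  - case: (classic (exists m, R q m)) => [[m Hm]|Hno].
    + exists (maxn N m.+1) => n Hn q'; rewrite seq.in_cons => /orP [/eqP ->|Hq'].
      * move=> Hq. have E := HR _ _ _ Hm Hq. subst n.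
        by move: Hn; rewrite geq_max ltnn andbF.
      * apply: HN => //. by move: Hn; rewrite geq_max => /andP [].
    + exists N => n Hn q'; rewrite seq.in_cons => /orP [/eqP ->|Hq'].
      * move=> Hq. apply: Hno. by exists n.
      * exact: HN.
Qed.

Lemma div_psi (a g : Z) : (0 < g)%Z -> (g | a)%Z -> psi (a / g)%Z = psi a / psi g.
Proof.
  move=> Hg [k Hk]. have Hg0 : psi g != 0.
  { apply/eqP => E. rewrite -psi0 in E. move: (psi_inj _ _ E) => E'. lia. }
  have E : (a / g)%Z = k by rewrite Hk Z.div_mul //; lia.
  rewrite E Hk psiM. field. exact: Hg0.
Qed.

Theorem mainTheorem9 (d : int) :
  squarefree_int d -> Hd_nonempty d -> Hd_infinite d.
Proof.
  move=> [dnz _] [[[X0 Y0] Z0] [Hnz HE]] s.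
  have HXZ : ~ (X0 = 0 /\ Z0 = 0).
  { move=> [EX EZ]. move: Hnz HE; rewrite EX EZ => Hnz HE.
    have F0 : Fhom 0 0 = 0 by rewrite /Fhom; ring.
    rewrite F0 in HE. move/eqP: HE; rewrite mulf_eq0 intr_eq0 (negbTE dnz) /= expf_eq0 /=.
    move/eqP => EY. by rewrite EY eqxx in Hnz. }
  set e1 := denq X0. set e2 := denq Z0.
  have He1 : (e1%:~R : rat) != 0 by rewrite intr_eq0 denq_neq0.
  have He2 : (e2%:~R : rat) != 0 by rewrite intr_eq0 denq_neq0.
  set u := (numq X0 * e2)%R. set v := (numq Z0 * e1)%R.
  have Hu : (u%:~R : rat) = (e1 * e2)%:~R * X0.
  { rewrite /u !intrM -{2}(divq_num_den X0) -/e1. field. exact: He1. }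
  have Hv : (v%:~R : rat) = (e1 * e2)%:~R * Z0.
  { rewrite /v !intrM -{2}(divq_num_den Z0) -/e2. field. exact: He2. }
  have He : ((e1 * e2)%:~R : rat) != 0 by rewrite intrM mulf_neq0.
  set u' := Z_of_int u. set v' := Z_of_int v.
  set g0 := Z.gcd u' v'.
  have Hg0 : (0 < g0)%Z.
  { have := Z.gcd_nonneg u' v'. rewrite -/g0.
    case: (Z.eq_dec g0 0) => [E|E]; last by lia.
    move/Z.gcd_eq_0: E => [E1 E2]. exfalso. apply: HXZ.
    have P1 : psi u' = 0 by rewrite E1.
    have P2 : psi v' = 0 by rewrite E2.
    rewrite /u' /v' !psiZ Hu Hv in P1 P2.
    move/eqP: P1; rewrite mulf_eq0 (negbTE He) /= => /eqP ->.
    move/eqP: P2; rewrite mulf_eq0 (negbTE He) /= => /eqP ->. by []. }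
  have Hpg : psi g0 != 0.
  { apply/eqP => E. rewrite -psi0 in E. move: (psi_inj _ _ E) => E'. lia. }
  set p0 := ((u' / g0)%Z, (v' / g0)%Z).
  have Hcop : Z.gcd p0.1 p0.2 = 1%Z.
  { rewrite /p0 /=. apply: Z.gcd_div_gcd; [lia | reflexivity]. }
  set c := ((e1 * e2)%:~R / psi g0 : rat).
  have Hx : psi p0.1 = c * X0.
  { rewrite /p0 /= div_psi //; last exact: Z.gcd_divide_l.
    rewrite /u' psiZ Hu /c. field. exact: Hpg. }
  have Hz : psi p0.2 = c * Z0.
  { rewrite /p0 /= div_psi //; last exact: Z.gcd_divide_r.
    rewrite /v' psiZ Hv /c. field. exact: Hpg. }
  set Y1 := c ^+ 2 * Y0.
  have HY1 : d%:~R * Y1 ^+ 2 = Fhom (psi p0.1) (psi p0.2).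
  { rewrite Hx Hz hom4 -HE /Y1. ring. }
  have [N HN] := @pigeon _ (fun q n => wequiv q (Pt p0 Y1 n)) s
                   (fun q n m => Pt_uniq p0 Y1 q n m Hcop).
  exists (Pt p0 Y1 N). split; first exact: Pt_triple.
  move=> q Hq. exact: (HN N (leqnn N) q Hq).
Qed.
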